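(* Let $p$ be a prime, $n$ a non-negative integer and $A_*$ a graded commutative $\mathbb F_p$-algebra. The subset $G_{p,n}(A_* )$ of $G_p(A_* )$ consisting of the elements $\alpha(X)=\sum_{i\ge0}\alpha_iX^{p^i}$ with $\alpha_i^{p^{n-i+1}}=0$ for $i=1,2,\dots,n$ and $\alpha_i=0$ for $i\ge n+1$ is a subgroup of $G_p(A_* )$.
   Context: Graded commutative means $ab=(-1)^{\deg a\deg b}ba$. If $p=2$, $G_2(A_* )$ is the set of power series $\alpha(X)=\sum_{i\ge0}\alpha_iX^{2^i}\in A_*[[X]]$ ($X$ of degree $-1$) with $\alpha_i\in A_{2^i-1}$ and $\alpha_0=1$. If $p$ is odd, let $\epsilon$ have degree $-1$ with $\epsilon^2=0$, $X$ degree $-2$, and $G_p(A_* )$ is the set of $\alpha(X)=\sum_{i\ge0}\alpha_iX^{p^i}\in (A_*\otimes_{\mathbb F_p}\mathbb F_p[\epsilon]/(\epsilon^2))[[X]]$ with $\alpha_i$ homogeneous of degree $2(p^i-1)$ and $\alpha_0-1\in(\epsilon)$. The group law is $\alpha(X)\cdot\beta(X)=\beta(\alpha(X))$, i.e. the coefficient of $X^{p^i}$ in $\alpha\cdot\beta$ is $\sum_{j=0}^i\alpha_{i-j}^{p^j}\beta_j$. *)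

(* Defs.v *)
From HB Require Import structures.
From mathcomp Require Import all_boot all_order all_algebra.
Set Implicit Arguments. Unset Strict Implicit. Unset Printing Implicit Defensive.
Import GRing.Theory.
Local Open Scope ring_scope.

Section GradedGroups.
Variable R : pzRingType.

(* A graded commutative F_p-algebra A_* = (+)_{k : int} A_k, presented as a ring R
   (the total algebra) together with the predicates A k (the homogeneous
   components of degree k). *)
Definition graded_comm_Fp_algebra (p : nat) (A : int -> {pred R}) : Prop :=
  p%:R = 0 :> R /\
      (forall k, 0 \in A k /\
         forall x y, x \in A k -> y \in A k -> x - y \in A k) /\
      1 \in A 0 /\
      (forall k l x y, x \in A k -> y \in A l -> x * y \in A (k + l)) /\
      (forall k l x y, x \in A k -> y \in A l ->
         x * y = (-1) ^+ `|(k * l)%R|%N * (y * x)) /\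
      (forall x, exists (s : seq int) (f : int -> R),
         (forall k, f k \in A k) /\ x = \sum_(k <- s) f k) /\
      (forall (s : seq int) (f : int -> R), uniq s ->
         (forall k, f k \in A k) -> \sum_(k <- s) f k = 0 ->
         forall k, k \in s -> f k = 0).

(* alpha(X) = sum_i alpha_i X^(2^i), alpha_i in A_{2^i-1}, alpha_0 = 1 *)
Definition G2 (A : int -> {pred R}) (alpha : nat -> R) : Prop :=
  alpha 0%N = 1 /\ forall i : nat, alpha i \in A ((2 ^ i)%N%:Z - 1).

Definition G2mul (alpha beta : nat -> R) : nat -> R :=
  fun i => \sum_(j < i.+1) alpha (i - j)%N ^+ (2 ^ j) * beta j.

Definition G2one : nat -> R := fun i => if i == 0%N then 1 else 0.

Definition G2n (A : int -> {pred R}) (n : nat) (alpha : nat -> R) : Prop :=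
  [/\ G2 A alpha,
      (forall i : nat, (1 <= i <= n)%N -> alpha i ^+ (2 ^ (n - i + 1)) = 0)
    & (forall i : nat, (n < i)%N -> alpha i = 0)].

(* All coefficients have even total degree, so an element of degree 2m of
   A_* (x) F_p[eps]/(eps^2) is  a + b eps  with a in A_{2m}, b in A_{2m+1};
   we represent it by the pair (a, b).  For such even-degree elements the graded
   tensor product multiplication is (a + b eps)(c + d eps) = ac + (ad + bc) eps
   (eps commutes with the even-degree c, and b eps d eps = -bd eps^2 = 0). *)
Definition dmul (x y : R * R) : R * R := (x.1 * y.1, x.1 * y.2 + x.2 * y.1).
Definition dadd (x y : R * R) : R * R := (x.1 + y.1, x.2 + y.2).
Definition dexp (x : R * R) (m : nat) : R * R := iter m (dmul x) (1, 0).

Definition Gp (p : nat) (A : int -> {pred R}) (alpha : nat -> R * R) : Prop :=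
  (alpha 0%N).1 = 1 /\
  forall i : nat, (alpha i).1 \in A (2 * ((p ^ i)%N%:Z - 1))
               /\ (alpha i).2 \in A (2 * ((p ^ i)%N%:Z - 1) + 1).

Definition Gpmul (p : nat) (alpha beta : nat -> R * R) : nat -> R * R :=
  fun i => \big[dadd/(0, 0)]_(j < i.+1) dmul (dexp (alpha (i - j)%N) (p ^ j)) (beta j).

Definition Gpone : nat -> R * R := fun i => if i == 0%N then (1, 0) else (0, 0).

Definition Gpn (p : nat) (A : int -> {pred R}) (n : nat) (alpha : nat -> R * R) : Prop :=
  [/\ Gp p A alpha,
      (forall i : nat, (1 <= i <= n)%N -> dexp (alpha i) (p ^ (n - i + 1)) = (0, 0))
    & (forall i : nat, (n < i)%N -> alpha i = (0, 0))].

End GradedGroups.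

Definition is_subgroup (T : Type) (G H : T -> Prop) (mul : T -> T -> T) (e : T) : Prop :=
  [/\ (forall x, H x -> G x), H e,
      (forall x y, H x -> H y -> H (mul x y))
    & (forall x, H x -> exists y, [/\ H y, mul x y = e & mul y x = e])].

(* Main.v *)
Require Import Defs.
From HB Require Import structures.
From mathcomp Require Import all_boot all_order all_algebra.
From mathcomp Require Import zify ring.
From Stdlib Require Import FunctionalExtensionality.
Set Implicit Arguments. Unset Strict Implicit. Unset Printing Implicit Defensive.
Import GRing.Theory.
Local Open Scope ring_scope.


Section Gen.
Variables (T : pzRingType) (p : nat).
Hypothesis pp : prime p.
Hypothesis hp : p%:R = 0 :> T.

Lemma frob1 (x y : T) : GRing.comm x y -> (x + y) ^+ p = x ^+ p + y ^+ p.
Proof.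
move=> cxy.
have defp := prednK (prime_gt0 pp).
rewrite exprDn_comm // big_ord_recr subnn -defp big_ord_recl /= defp.
rewrite subn0 mulr1 mul1r bin0 binn big1 ?addr0 // => i _.
have : (0 < bump 0 i < p)%N by rewrite /bump /= add1n /= -{2}defp ltnS (valP i).
move/(prime_dvd_bin pp)/dvdnP=> [m ->].
by rewrite -mulr_natl natrM hp mulr0 mul0r.
Qed.

Lemma frobX (x y : T) j : GRing.comm x y -> (x + y) ^+ (p ^ j) = x ^+ (p ^ j) + y ^+ (p ^ j).
Proof.
move=> cxy; elim: j => [|j IH]; first by rewrite !expn0 !expr1.
rewrite expnSr !exprM IH frob1 //.
by apply: commrX; apply: commr_sym; apply: commrX; apply: commr_sym.
Qed.

Lemma pexp_eq0 j : (p ^ j == 0)%N = false.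
Proof. by rewrite expn_eq0 eqn0Ngt prime_gt0. Qed.

Lemma zeroXp j : (0 : T) ^+ (p ^ j) = 0.
Proof. by rewrite expr0n pexp_eq0. Qed.

Lemma frob_sum n (F : 'I_n -> T) j :
  (forall a b, GRing.comm (F a) (F b)) ->
  (\sum_(i < n) F i) ^+ (p ^ j) = \sum_(i < n) F i ^+ (p ^ j).
Proof.
elim: n F => [|n IH] F hF; first by rewrite !big_ord0 zeroXp.
rewrite !big_ord_recr /= frobX ?IH //.
apply: commr_sym; apply: commr_sum => i _; exact: hF.
Qed.

Lemma powp0 (x : T) a b : x ^+ (p ^ a) = 0 -> (a <= b)%N -> x ^+ (p ^ b) = 0.
Proof.
move=> h le; by rewrite -(subnKC le) expnD exprM h zeroXp.
Qed.

Variable C : T -> Prop.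
Hypothesis hC : forall x y, C x -> C y -> GRing.comm x y.

Definition mulT (a b : nat -> T) i := \sum_(j < i.+1) a (i - j)%N ^+ (p ^ j) * b j.
Definition oneT (i : nat) : T := if i == 0%N then 1 else 0.

Definition allC (a : nat -> T) := forall i, C (a i).

Lemma commXM a b c d m k : C a -> C b -> C c -> C d ->
  GRing.comm (a ^+ m * b) (c ^+ k * d).
Proof.
move=> Ca Cb Cc Cd.
have cXX : forall u v n l, C u -> C v -> GRing.comm (u ^+ n) (v ^+ l).
  by move=> u v n l Cu Cv; apply: commrX; apply: commr_sym; apply: commrX; apply: hC.
have cX1 : forall u v n, C u -> C v -> GRing.comm (u ^+ n) v.
  by move=> u v n Cu Cv; rewrite -[v]expr1; apply: cXX.
have c1X : forall u v n, C u -> C v -> GRing.comm u (v ^+ n).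
  by move=> u v n Cu Cv; rewrite -[u]expr1; apply: cXX.
apply: commrM; apply: commr_sym; apply: commrM; apply: commr_sym; auto.
Qed.

Lemma tri_exch (F : nat -> nat -> T) i :
  \sum_(j < i.+1) \sum_(k < (i - j).+1) F j k =
  \sum_(m < i.+1) \sum_(j < m.+1) F j (m - j)%N.
Proof.
elim: i => [|i IH]; first by rewrite !big_ord_recr !big_ord0 /= !add0r.
rewrite [RHS]big_ord_recr /= -IH.
have -> : \sum_(j < i.+2) \sum_(k < (i.+1 - j).+1) F j k =
   \sum_(j < i.+2) (\sum_(k < (i.+1 - j)) F j k + F j (i.+1 - j)%N).
  by apply: eq_bigr => j _; rewrite big_ord_recr.
rewrite big_split /= big_ord_recr /= subnn big_ord0 addr0.
congr (_ + _); apply: eq_bigr => j _.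
by rewrite subSn // -ltnS.
Qed.

Lemma mulTA a b c i : allC a -> allC b -> allC c ->
  mulT (mulT a b) c i = mulT a (mulT b c) i.
Proof.
move=> Ca Cb Cc; rewrite /mulT.
transitivity (\sum_(j < i.+1) \sum_(k < (i - j).+1)
   (a (i - j - k)%N ^+ (p ^ (k + j)) * b k ^+ (p ^ j) * c j)).
  apply: eq_bigr => j _; rewrite frob_sum; last by move=> u v; apply: commXM.
  rewrite mulr_suml; apply: eq_bigr => k _.
  rewrite exprMn_comm -?exprM -?expnD //.
  by apply: commr_sym; apply: commrX; apply: hC.
rewrite (tri_exch (fun j k => a (i - j - k)%N ^+ (p ^ (k + j)) * b k ^+ (p ^ j) * c j)) /=; apply: eq_bigr => m _; rewrite mulr_sumr.
apply: eq_bigr => j _; rewrite mulrA.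
have hj : (j <= m)%N by rewrite -ltnS.
rewrite subnK //; congr (_ ^+ _ * _ * _); congr (a _); lia.
Qed.

Lemma mulT_ext a a' b b' i : (forall k, a k = a' k) -> (forall k, b k = b' k) ->
  mulT a b i = mulT a' b' i.
Proof. by move=> ha hb; rewrite /mulT; apply: eq_bigr => j _; rewrite ha hb. Qed.

Lemma mulT1 a i : mulT a oneT i = a i.
Proof.
rewrite /mulT big_ord_recl /= subn0 expn0 expr1 /oneT /= mulr1 big1 ?addr0 //.
by move=> j _; rewrite mulr0.
Qed.

Lemma mul1T a i : mulT oneT a i = a i.
Proof.
rewrite /mulT big_ord_recr /= subnn /oneT /= expr1n mul1r big1 ?add0r //.
move=> j _; have -> : (i - j == 0)%N = false by apply/negbTE; rewrite subn_eq0 -ltnNge.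
by rewrite zeroXp mul0r.
Qed.

Lemma mulT0 a b : mulT a b 0 = a 0%N * b 0%N.
Proof. by rewrite /mulT big_ord_recl big_ord0 addr0 /= expn0 expr1. Qed.

Variable P : nat -> T -> Prop.
Hypothesis PC : forall i x, P i x -> C x.
Hypothesis P0 : forall i, P i 0.
Hypothesis PD : forall i x y, P i x -> P i y -> P i (x + y).
Hypothesis PN : forall i x, P i x -> P i (- x).
Hypothesis P1 : P 0 1.
Hypothesis PM : forall k j x y, P k x -> P j y -> P (k + j) (x ^+ (p ^ j) * y).

Definition Good (a : nat -> T) := a 0%N ^+ p = 1 /\ forall i, P i (a i).
Definition NilT n (a : nat -> T) := (forall i, (1 <= i <= n)%N -> a i ^+ (p ^ (n - i + 1)) = 0) /\
   (forall i, (n < i)%N -> a i = 0).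

Lemma GoodC a : Good a -> allC a.
Proof. by move=> [_ h] i; apply: (PC (h i)). Qed.

Lemma sumP i n (F : 'I_n -> T) : (forall j, P i (F j)) -> P i (\sum_(j < n) F j).
Proof.
elim: n F => [|n IH] F hF; first by rewrite big_ord0.
by rewrite big_ord_recr /=; apply: PD; [apply: IH|].
Qed.

Lemma termP i j x y : (j <= i)%N -> P (i - j) x -> P j y -> P i (x ^+ (p ^ j) * y).
Proof. by move=> hj hx hy; have := PM hx hy; rewrite subnK. Qed.

Lemma mul_good a b : Good a -> Good b -> Good (mulT a b).
Proof.
move=> [a0 ha] [b0 hb]; split.
  rewrite mulT0 exprMn_comm ?a0 ?b0 ?mulr1 //; apply: hC; [exact: PC (ha 0%N)|exact: PC (hb 0%N)].
by move=> i; apply: sumP => j; apply: termP => //; rewrite -ltnS.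
Qed.

Lemma mul_nil n a b : Good a -> Good b -> NilT n a -> NilT n b -> NilT n (mulT a b).
Proof.
move=> Ga Gb [Na1 Na2] [Nb1 Nb2]; have Ca := GoodC Ga; have Cb := GoodC Gb; split.
  move=> i hi; rewrite /mulT frob_sum; last by move=> u v; apply: commXM.
  apply: big1 => j _.
  rewrite exprMn_comm; last by apply: commr_sym; apply: commrX; apply: hC.
  rewrite -exprM -expnD.
  have hj : (j <= i)%N by rewrite -ltnS.
  case: (ltnP j i) => hji.
    rewrite (@powp0 _ (n - (i - j) + 1)) ?mul0r //; last by lia.
    by apply: Na1; lia.
  have -> : nat_of_ord j = i by lia.
  by rewrite Nb1 // mulr0.
move=> i hi; rewrite /mulT; apply: big1 => j _.
have hj : (j <= i)%N by rewrite -ltnS.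
case: (leqP j n) => hjn; last by rewrite Nb2 // mulr0.
case: (leqP (i - j) n) => hij; last by rewrite Na2 // zeroXp mul0r.
rewrite (@powp0 _ (n - (i - j) + 1)) ?mul0r //; last by lia.
by apply: Na1; lia.
Qed.

Fixpoint invf (a : nat -> T) (i : nat) : nat -> T :=
  match i with
  | 0 => fun _ => a 0%N ^+ p.-1
  | i'.+1 => fun k => if (k <= i')%N then invf a i' k
      else - \sum_(j < i'.+1) a (i'.+1 - j)%N ^+ (p ^ j) * invf a i' j
  end.
Definition invT a i := invf a i i.

Lemma invfE a i k : (k <= i)%N -> invf a i k = invT a k.
Proof.
elim: i k => [|i IH] k hk; first by have -> : k = 0%N by lia.
rewrite /=; case: ifP => hki; first exact: IH.
move/negbT: hki; rewrite -ltnNge => hki.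
have e : k = i.+1 by lia.
by rewrite e /invT /= ltnn.
Qed.

Lemma invT0 a : invT a 0 = a 0%N ^+ p.-1.
Proof. by []. Qed.

Lemma invTS a i : invT a i.+1 =
   - \sum_(j < i.+1) a (i.+1 - j)%N ^+ (p ^ j) * invT a j.
Proof.
rewrite /invT /= ltnn; congr (- _); apply: eq_bigr => j _.
by rewrite invfE // -ltnS.
Qed.

Lemma mulTinv a i : a 0%N ^+ p = 1 -> mulT a (invT a) i = oneT i.
Proof.
move=> a0; case: i => [|i].
  by rewrite mulT0 invT0 -exprS prednK // prime_gt0.
rewrite /mulT big_ord_recr /= subnn expnS exprM a0 expr1n mul1r invTS.
by rewrite addrN.
Qed.

Lemma P0pow x m : P 0 x -> P 0 (x ^+ m).
Proof.
move=> hx; elim: m => [|m IH]; first by rewrite expr0.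
by rewrite exprS -[x in x * _]expr1 -(expn0 p); apply: (PM hx IH).
Qed.

Lemma inv_good a : Good a -> Good (invT a).
Proof.
move=> [a0 ha]; split; first by rewrite invT0 exprAC a0 expr1n.
move=> i; elim: i {-2}i (leqnn i) => [|i IH] k hk.
  have -> : k = 0%N by lia.
  by rewrite invT0; apply: P0pow.
case: (leqP k i) => hki; first exact: IH.
have -> : k = i.+1 by lia.
rewrite invTS; apply: PN; apply: sumP => j; apply: termP.
- exact: ltnW (ltn_ord j).
- exact: ha.
- by apply: IH; rewrite -ltnS.
Qed.

Lemma inv_nil n a : Good a -> NilT n a -> NilT n (invT a).
Proof.
move=> Ga [Na1 Na2]; have Ca := GoodC Ga; have Cy := GoodC (inv_good Ga); split.
  move=> [|i] hi; first by [].
  rewrite invTS exprNn frob_sum; last by move=> u v; apply: commXM.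
  rewrite big1 ?mulr0 // => j _; have hj := ltn_ord j.
  rewrite exprMn_comm; last by apply: commr_sym; apply: commrX; apply: hC.
  rewrite -exprM -expnD (@powp0 _ (n - (i.+1 - j) + 1)) ?mul0r //; last by lia.
  by apply: Na1; lia.
move=> k; elim/ltn_ind: k => k IH hk.
case: k IH hk => [|i] IH hk; first by [].
rewrite invTS big1 ?oppr0 // => j _; have hj := ltn_ord j.
case: (leqP j n) => hjn; last by rewrite IH ?mulr0.
case: (leqP (i.+1 - j) n) => hij; last by rewrite Na2 // zeroXp mul0r.
rewrite (@powp0 _ (n - (i.+1 - j) + 1)) ?mul0r //; last by lia.
by apply: Na1; lia.
Qed.

Lemma invmulT a i : Good a -> mulT (invT a) a i = oneT i.
Proof.
move=> Ga; have Gy := inv_good Ga; have Gz := inv_good Gy.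
have hz : forall k, a k = invT (invT a) k.
  move=> k; rewrite -[LHS]mulT1.
  rewrite (@mulT_ext a a oneT (mulT (invT a) (invT (invT a)))) //; last first.
    by move=> l; rewrite mulTinv //; case: Gy.
  rewrite -mulTA; try exact: GoodC.
  rewrite (@mulT_ext _ oneT _ (invT (invT a))) ?mul1T // => l.
  by rewrite mulTinv //; case: Ga.
rewrite (@mulT_ext _ (invT a) _ (invT (invT a))) //.
by apply: mulTinv; case: Gy.
Qed.

Lemma gen_all :
 (forall a b, Good a -> Good b -> Good (mulT a b)) /\
  (forall n a b, Good a -> Good b -> NilT n a -> NilT n b -> NilT n (mulT a b)) /\
  (forall a, Good a -> Good (invT a)) /\
  (forall n a, Good a -> NilT n a -> NilT n (invT a)) /\
  (forall a i, Good a -> mulT a (invT a) i = oneT i) /\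
  (forall a i, Good a -> mulT (invT a) a i = oneT i).
Proof.
split; [|split; [|split; [|split; [|split]]]].
- exact: mul_good.
- exact: mul_nil.
- exact: inv_good.
- exact: inv_nil.
- by move=> a i [a0 _]; apply: mulTinv.
- by move=> a i Ga; apply: invmulT.
Qed.

End Gen.


Section Graded.
Variables (R : pzRingType) (p : nat) (A : int -> {pred R}).
Hypothesis hA : graded_comm_Fp_algebra p A.

Lemma Ahp : p%:R = 0 :> R. Proof. by case: hA. Qed.
Lemma A0 k : 0 \in A k. Proof. by case: hA => _ [h _]; case: (h k). Qed.
Lemma AB k x y : x \in A k -> y \in A k -> x - y \in A k.
Proof. by case: hA => _ [h _]; case: (h k) => _; apply. Qed.
Lemma AN k x : x \in A k -> - x \in A k.
Proof. by move=> hx; have := AB (A0 k) hx; rewrite sub0r. Qed.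
Lemma AD k x y : x \in A k -> y \in A k -> x + y \in A k.
Proof. by move=> hx hy; have := AB hx (AN hy); rewrite opprK. Qed.
Lemma A1 : 1 \in A 0. Proof. by case: hA => _ [_ [h _]]. Qed.
Lemma AM k l x y : x \in A k -> y \in A l -> x * y \in A (k + l).
Proof. by case: hA => _ [_ [_ [h _]]]; exact: h. Qed.
Lemma Acomm k l x y : x \in A k -> y \in A l ->
  x * y = (-1) ^+ `|(k * l)%R|%N * (y * x).
Proof. by case: hA => _ [_ [_ [_ [h _]]]]; exact: h. Qed.
Lemma Aeq k l x : x \in A k -> k = l -> x \in A l.
Proof. by move=> h <-. Qed.
Lemma Apow k x m : x \in A k -> x ^+ m \in A (k * m%:Z).
Proof.
move=> hx; elim: m => [|m IH]; first by rewrite expr0 mulr0; apply: A1.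
rewrite exprS; apply: Aeq (AM hx IH) _.
rewrite -[m.+1]addn1 PoszD; ring.
Qed.
Lemma evencomm k l x y : x \in A (2 * k) -> y \in A l -> x * y = y * x.
Proof.
move=> hx hy; rewrite (Acomm hx hy) -mulrA abszM.
have -> : `|2%R|%N = 2%N by [].
by rewrite exprM sqrrN expr1n expr1n mul1r.
Qed.
End Graded.

Lemma case2 (R : pzRingType) (A : int -> {pred R}) (n : nat) :
  graded_comm_Fp_algebra 2 A -> is_subgroup (G2 A) (G2n A n) (@G2mul R) (@G2one R).
Proof.
move=> hA.
have hp : 2%:R = 0 :> R := Ahp hA.
have m1 : -1 = 1 :> R.
  by apply/eqP; rewrite -subr_eq0 -opprD -mulr2n hp oppr0.
pose C (x : R) := exists k, x \in A k.
pose P (i : nat) (x : R) := x \in A ((2 ^ i)%N%:Z - 1).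
have hC : forall x y, C x -> C y -> GRing.comm x y.
  move=> x y [k hx] [l hy]; rewrite /GRing.comm (Acomm hA hx hy) m1 expr1n mul1r //.
have PC : forall i x, P i x -> C x.
  by move=> i x hx; exists ((2 ^ i)%N%:Z - 1); exact: hx.
have P0 : forall i, P i 0 by move=> i; apply: (A0 hA).
have PD : forall i x y, P i x -> P i y -> P i (x + y) by move=> i x y; apply: (AD hA).
have PN : forall i x, P i x -> P i (- x) by move=> i x; apply: (AN hA).
have P1 : P 0%N 1 by rewrite /P expn0 subrr; apply: (A1 hA).
have PM : forall k j x y, P k x -> P j y -> P (k + j)%N (x ^+ (2 ^ j) * y).
  move=> k j x y hx hy; apply: Aeq (AM hA (Apow hA (2 ^ j) hx) hy) _.
  by rewrite expnD PoszM; ring.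
have [gmul [gnil [ginv [gninv [gr gl]]]]] := gen_all (isT : prime 2) hp hC PC P0 PD PN P1 PM.
split.
- by move=> x [].
- split.
  + split; first by [].
    by case=> [|i]; [exact: P1 | exact: (A0 hA)].
  + by case=> [|i] //= _; rewrite expr0n expn_eq0.
  + by case=> [|i].
- move=> a b [[a0 ha] Na1 Na2] [[b0 hb] Nb1 Nb2].
  have Ga : Good 2 P a by split; [rewrite a0 expr1n|].
  have Gb : Good 2 P b by split; [rewrite b0 expr1n|].
  have [g1 g2] := gmul a b Ga Gb.
  have [n1 n2] := gnil n a b Ga Gb (conj Na1 Na2) (conj Nb1 Nb2).
  split => //; split => //.
  by change (mulT 2 a b 0 = 1); rewrite mulT0 a0 b0 mulr1.
- move=> a [[a0 ha] Na1 Na2].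
  have Ga : Good 2 P a by split; [rewrite a0 expr1n|].
  have [g1 g2] := ginv a Ga.
  have [n1 n2] := gninv n a Ga (conj Na1 Na2).
  exists (invT 2 a); split.
  + split => //; split => //.
  + by apply: functional_extensionality => i; exact (gr a i Ga).
  + by apply: functional_extensionality => i; exact (gl a i Ga).
Qed.


Section Phi.
Variable R : pzRingType.

Definition phi (x : R * R) : 'M[R]_2 :=
  \matrix_(i, j) (if (i : nat) == j then x.1 else if (i < j)%N then x.2 else 0).

Lemma phi00 x : phi x ord0 ord0 = x.1. Proof. by rewrite mxE. Qed.
Lemma phi01 x : phi x ord0 ord_max = x.2. Proof. by rewrite mxE. Qed.

Lemma phi_inj x y : phi x = phi y -> x = y.
Proof.
move=> h; case: x y h => [a b] [c d] h.
have h1 := congr1 (fun M : 'M[R]_2 => M ord0 ord0) h.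
have h2 := congr1 (fun M : 'M[R]_2 => M ord0 ord_max) h.
by rewrite /= !phi00 !phi01 /= in h1 h2; rewrite h1 h2.
Qed.

Lemma phiM x y : phi (dmul x y) = phi x * phi y.
Proof.
apply/matrixP => i j; rewrite -mulmxE !mxE !big_ord_recl big_ord0 !mxE.
case: i => [[|[|//]] ?]; case: j => [[|[|//]] ?] /=;
  by rewrite ?mulr0 ?mul0r ?addr0 ?add0r.
Qed.

Lemma phiD x y : phi (dadd x y) = phi x + phi y.
Proof.
apply/matrixP => i j; rewrite !mxE.
by case: i => [[|[|//]] ?]; case: j => [[|[|//]] ?] /=; rewrite ?addr0.
Qed.

Lemma phiN a b : phi (- a, - b) = - phi (a, b).
Proof.
apply/matrixP => i j; rewrite !mxE.
by case: i => [[|[|//]] ?]; case: j => [[|[|//]] ?] /=; rewrite ?oppr0.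
Qed.

Lemma phi0 : phi (0, 0) = 0.
Proof.
apply/matrixP => i j; rewrite !mxE.
by case: i => [[|[|//]] ?]; case: j => [[|[|//]] ?].
Qed.

Lemma phi1 : phi (1, 0) = 1.
Proof.
apply/matrixP => i j; rewrite !mxE.
by case: i => [[|[|//]] ?]; case: j => [[|[|//]] ?].
Qed.

Lemma phi_exp x m : phi (dexp x m) = phi x ^+ m.
Proof.
elim: m => [|m IH]; first by rewrite expr0 -phi1.
by rewrite exprS -IH -phiM.
Qed.

Lemma phi_sum k (F : 'I_k -> R * R) :
  phi (\big[@dadd R/(0, 0)]_(j < k) F j) = \sum_(j < k) phi (F j).
Proof. exact: (big_morph phi phiD phi0). Qed.

Lemma dexpE (a b : R) m : a * b = b * a ->
  dexp (a, b) m = (a ^+ m, (a ^+ m.-1 * b) *+ m).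
Proof.
move=> cab; elim: m => [|m IH]; first by rewrite expr0 mulr0n.
rewrite /dexp iterS -/(dexp _ _) IH /dmul /= -exprS; congr pair.
case: m IH => [|m] IH /=; first by rewrite !mulr0n mulr0 add0r mulr1 expr0 mul1r.
by rewrite -mulrnAr mulrA -exprS mulrnAr (commrX m.+1 (esym cab)) -mulrSr.
Qed.

Lemma phi_Gpmul p a b i :
  phi (Gpmul p a b i) = mulT p (fun k => phi (a k)) (fun k => phi (b k)) i.
Proof.
rewrite /Gpmul phi_sum /mulT; apply: eq_bigr => j _.
by rewrite phiM phi_exp.
Qed.

End Phi.

Lemma caseodd (p : nat) (R : pzRingType) (A : int -> {pred R}) (n : nat) :
  prime p -> graded_comm_Fp_algebra p A ->
  is_subgroup (Gp p A) (Gpn p A n) (@Gpmul R p) (@Gpone R).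
Proof.
move=> pp hA.
have hp : p%:R = 0 :> R := Ahp hA.
have hpM : p%:R = 0 :> 'M[R]_2.
  by rewrite -(rmorph_nat (@scalar_mx R 2)) hp raddf0.
pose C (M : 'M[R]_2) := exists a b k l, M = phi (a, b) /\ a \in A (2 * k) /\ b \in A l.
pose P (i : nat) (M : 'M[R]_2) := exists a b, M = phi (a, b) /\
   a \in A (2 * ((p ^ i)%N%:Z - 1)) /\ b \in A (2 * ((p ^ i)%N%:Z - 1) + 1).
have hC : forall x y, C x -> C y -> GRing.comm x y.
  move=> x y [a [b [k [l [-> [ha hb]]]]]] [c [d [k' [l' [-> [hc hd]]]]]].
  rewrite /GRing.comm -!phiM /dmul /=; congr phi; congr pair.
    exact: (evencomm hA ha hc).
  by rewrite (evencomm hA ha hd) (evencomm hA hc hb) addrC.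
have PC : forall i x, P i x -> C x.
  move=> i x [a [b [-> [ha hb]]]].
  by exists a, b, ((p ^ i)%N%:Z - 1), (2 * ((p ^ i)%N%:Z - 1) + 1).
have P0 : forall i, P i 0.
  by move=> i; exists 0, 0; rewrite phi0; split => //; split; apply: (A0 hA).
have PD : forall i x y, P i x -> P i y -> P i (x + y).
  move=> i x y [a [b [-> [ha hb]]]] [c [d [-> [hc hd]]]].
  by exists (a + c), (b + d); rewrite -phiD; split => //; split; apply: (AD hA).
have PN : forall i x, P i x -> P i (- x).
  move=> i x [a [b [-> [ha hb]]]].
  by exists (- a), (- b); rewrite -phiN; split => //; split; apply: (AN hA).
have P1 : P 0%N 1.
  exists 1, 0; rewrite phi1; split => //; split; last by apply: (A0 hA).
  by apply: Aeq (A1 hA) _; rewrite expn0; ring.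
have PM : forall k j x y, P k x -> P j y -> P (k + j)%N (x ^+ (p ^ j) * y).
  move=> k j x y [a [b [-> [ha hb]]]] [c [d [-> [hc hd]]]].
  rewrite -phi_exp -phiM dexpE; last exact: (evencomm hA ha hb).
  rewrite /dmul /=.
  set m := (p ^ j)%N.
  eexists; eexists; split; first reflexivity.
  have hm := Apow hA m ha.
  split.
    apply: Aeq (AM hA hm hc) _.
    by rewrite /m expnD PoszM; ring.
  apply: (AD hA).
    apply: Aeq (AM hA hm hd) _.
    by rewrite /m expnD PoszM; ring.
  clear hm; move: hc hd; case: j @m => [|j] m hc hd.
    rewrite /m expn0 /= expr0 mul1r mulr1n; apply: Aeq (AM hA hb hc) _.
    by rewrite addn0 expn0; ring.
  rewrite /m -mulr_natr natrX hp expr0n /= mulr0 mul0r; apply: (A0 hA).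
have [gmul [gnil [ginv [gninv [gr gl]]]]] := gen_all pp hpM hC PC P0 PD PN P1 PM.
have phiP : forall (g : nat -> R * R) i, P i (phi (g i)) ->
    (g i).1 \in A (2 * ((p ^ i)%N%:Z - 1)) /\ (g i).2 \in A (2 * ((p ^ i)%N%:Z - 1) + 1).
  move=> g i [a [b [e hab]]]; move/phi_inj: e => ->; exact: hab.
have toG : forall g : nat -> R * R, (g 0%N).1 = 1 -> (forall i, P i (phi (g i))) ->
    NilT p n (fun k => phi (g k)) -> Gpn p A n g.
  move=> g g0 gP [N1 N2]; split.
  - by split => // i; apply: phiP.
  - move=> i hi; apply: phi_inj; rewrite phi_exp phi0; exact: N1.
  - move=> i hi; apply: phi_inj; rewrite phi0; exact: N2.
have fromG : forall g : nat -> R * R, Gpn p A n g ->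
    Good p P (fun k => phi (g k)) /\ NilT p n (fun k => phi (g k)).
  move=> g [[g0 gA] N1 N2]; split; [split|split].
  - case E: (g 0%N) g0 => [a0 b0] /= g0; rewrite g0.
    rewrite -phi_exp dexpE ?mul1r ?mulr1 // expr1n -mulr_natr hp mulr0.
    exact: phi1.
  - move=> i; exists (g i).1, (g i).2; split; first by case: (g i).
    exact: gA.
  - by move=> i hi; rewrite -phi_exp N1 // phi0.
  - by move=> i hi; rewrite N2 // phi0.
have oneE : forall i, oneT _ i = phi (Gpone R i).
  by case=> [|i]; rewrite /oneT /Gpone /= ?phi1 ?phi0.
split.
- by move=> x [].
- apply: toG => //.
  + by case=> [|i]; rewrite /Gpone /=; [rewrite phi1 | rewrite phi0].
  + split; first by case=> [|i] //= _; rewrite phi0 expr0n expn_eq0 eqn0Ngt prime_gt0.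
    by case=> [|i] //= _; rewrite phi0.
- move=> a b Ha Hb.
  have [Ga Na] := fromG a Ha; have [Gb Nb] := fromG b Hb.
  have [g1 g2] := gmul _ _ Ga Gb.
  have n12 := gnil n _ _ Ga Gb Na Nb.
  have E : (fun k => phi (Gpmul p a b k)) = mulT p (fun k => phi (a k)) (fun k => phi (b k)).
    by apply: functional_extensionality => k; rewrite phi_Gpmul.
  apply: toG.
  + case: Ha => [[a0 _] _ _]; case: Hb => [[b0 _] _ _].
    rewrite -phi00 phi_Gpmul mulT0 -phiM phi00 /= a0 b0 mulr1 //.
  + by move=> i; rewrite phi_Gpmul; apply: g2.
  + by rewrite E.
- move=> a Ha.
  have [Ga Na] := fromG a Ha.
  set y := invT p (fun k => phi (a k)).
  have [g1 g2] := ginv _ Ga.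
  have n12 := gninv n _ Ga Na.
  pose g i := (y i ord0 ord0, y i ord0 ord_max).
  have Ey : forall i, phi (g i) = y i.
    move=> i; case: (g2 i) => c [d [e _]].
    by rewrite /g /y e phi00 phi01.
  have E' : (fun k => phi (g k)) = y by apply: functional_extensionality.
  exists g; split.
  + apply: toG.
    * rewrite /g /y invT0 -phi_exp phi00.
      case: Ha => [[a0 _] _ _]; case E: (a 0%N) a0 => [a1 b1] /= ->.
      by rewrite dexpE ?mul1r ?mulr1 // expr1n.
    * by move=> i; rewrite Ey; apply: g2.
    * by rewrite E'.
  + apply: functional_extensionality => i; apply: phi_inj.
    by rewrite phi_Gpmul E' gr // oneE.
  + apply: functional_extensionality => i; apply: phi_inj.
    by rewrite phi_Gpmul E' gl // oneE.
Qed.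

Unset Implicit Arguments.

Theorem proposition3p5 (p : nat) (R : pzRingType) (A : int -> {pred R}) (n : nat) :
  prime p -> graded_comm_Fp_algebra p A ->
  (p = 2%N -> is_subgroup (G2 A) (G2n A n) (@G2mul R) (@G2one R)) /\
  (p <> 2%N -> is_subgroup (Gp p A) (Gpn p A n) (@Gpmul R p) (@Gpone R)).
Proof.
move=> pp hA; split => [p2|_]; last exact: caseodd.
by subst p; exact: case2.
Qed.
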